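(* Let $q$ be a prime power and let $n$ be an even positive integer such that $n/2$ is odd. Then there exists an $n$-code of $\mathcal H_{n,q^2}$ of size $\frac{3q^{n}-q^{n/2}}{2}$.
   Context: $\mathcal H_{n,q^2}$ denotes the set of $n\times n$ Hermitian matrices over ${\rm GF}(q^2)$, i.e. matrices $A=(a_{ij})$ with $a_{ji}=a_{ij}^q$ for all $i,j$. The rank distance is $d_r(A,B)={\rm rk}(A-B)$. A $d$-code of $\mathcal H_{n,q^2}$ is a non-empty subset $\mathcal C$ whose minimum distance $\min\{{\rm rk}(c_1-c_2): c_1\neq c_2\in\mathcal C\}$ equals $d$. *)

(* Defs.v *)
From HB Require Import structures.
From mathcomp Require Import all_boot all_order all_algebra.
Set Implicit Arguments. Unset Strict Implicit. Unset Printing Implicit Defensive.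
Import GRing.Theory.
Local Open Scope ring_scope.

Definition prime_power (q : nat) : Prop :=
  exists p k : nat, [/\ prime p, (0 < k)%N & q = (p ^ k)%N].

(* Hermitian n x n matrices over a field F = GF(q^2):
   a_ji = a_ij^q (Frobenius conjugation x |-> x^q). *)
Definition hermitian (F : fieldType) (q n : nat) (A : 'M[F]_n) : Prop :=
  forall i j : 'I_n, A j i = (A i j) ^+ q.

Definition is_hermitian_d_code (F : finFieldType) (q n d : nat)
    (C : {set 'M[F]_n}) : Prop :=
  [/\ C != set0,
      (forall c, c \in C -> hermitian q c),
      (exists c1 c2, [/\ c1 \in C, c2 \in C, c1 != c2 & \rank (c1 - c2)%R = d]) &
      (forall c1 c2, c1 \in C -> c2 \in C -> c1 != c2 -> (d <= \rank (c1 - c2)%R)%N)].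

(* Main.v *)
Require Import Defs.
From HB Require Import structures.
From mathcomp Require Import all_boot all_order all_algebra.
From mathcomp Require Import falgebra fieldext separable galois finfield.
From mathcomp Require Import zify ring.
Set Implicit Arguments. Unset Strict Implicit. Unset Printing Implicit Defensive.
Import GRing.Theory.
Local Open Scope ring_scope.

Lemma ext_all_root (F : finFieldType) (m : nat) (L : splittingFieldType F) :
  splittingFieldFor 1 (map_poly (in_alg L) ('X^(#|F| ^ m) - 'X)) {:L} ->
  forall x : L, x ^+ (#|F| ^ m) = x.
Proof.
move=> [zs DqL defL].
have /finField_galois_generator[/= a _ Da]: (1 <= {:L})%VS by apply: sub1v.
pose Em := fixedSpace (a ^+ m)%g; rewrite dimv1 expn1 in Da.
have aX : forall x, (a ^+ m)%g x = x ^+ (#|F| ^ m).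
  move=> x; elim: (m) => [|i IHi]; first by rewrite gal_id expn0 expr1.
  by rewrite expgSr expnSr exprM galM ?Da ?memvf // IHi.
have in_zs: forall z, z \in zs -> z \in Em.
  move=> z; rewrite -root_prod_XsubC -(eqp_root DqL) (sameP fixedSpaceP eqP).
  rewrite rmorphB /= map_polyXn map_polyX.
  by rewrite /root !hornerE subr_eq0 /= aX.
have defEm: Em = {:L}%VS.
  apply/eqP; rewrite eqEsubv subvf -defL -[Em]subfield_closed agenvS //.
  by rewrite subv_add sub1v; apply/span_subvP=> z /in_zs.
move=> x; have : x \in Em by rewrite defEm memvf.
by move/fixedSpaceP; rewrite aX.
Qed.

Lemma size_XnsubX (R : nzRingType) N : (1 < N)%N -> size ('X^N - 'X : {poly R}) = N.+1.
Proof.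
move=> hN; rewrite size_polyDl ?size_polyXn // size_polyN size_polyX ltnS //.
Qed.

Lemma card_LL (F : finFieldType) (L : splittingFieldType F) :
  #|FinFieldExtType L| = (#|F| ^ \dim {:L})%N.
Proof.
have := @card_vspacef F (finvect_type L) (Vector.class (finvect_type L : vectType F)).
by move=> <-; rewrite card_vspace.
Qed.

Lemma ext_deg (F : finFieldType) (p e m : nat) : prime p -> #|F| = (p ^ e)%N ->
  (0 < m)%N -> {L : splittingFieldType F | \dim {:L} = m}.
Proof.
move=> pp cF m0.
have F1 : (1 < #|F|)%N := finNzRing_gt1 F.
set N := (#|F| ^ m)%N.
have N1 : (1 < N)%N by rewrite /N -{1}(expn0 #|F|) ltn_exp2l.
pose P : {poly F} := 'X^N - 'X.
have nzP : P != 0 by rewrite -size_poly_gt0 size_XnsubX.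
have [L splitL] := FinSplittingFieldFor nzP.
exists L.
have allr := ext_all_root splitL.
pose LL := FinFieldExtType L.
have e0 : (0 < e)%N by case: e cF F1 => //; rewrite expn0 => ->.
have pchF : p \in [pchar F] by apply: (card_finPcharP cF).
have pchL : p \in [pchar L] by rewrite pchar_lalg.
have NR : (N%:R : L) = 0.
  by rewrite /N cF -expnM natrX (pcharf0 pchL) expr0n muln_eq0 !eqn0Ngt e0 m0.
have up : (#|LL| <= N)%N.
  have := @max_poly_roots LL ('X^N - 'X) (enum LL).
  rewrite -size_poly_gt0 size_XnsubX // cardE => H; rewrite -ltnS H //.
  - by apply/allP => x _; rewrite /root !hornerE subr_eq0; apply/eqP; exact: allr.
  - exact: enum_uniq.
have lo : (N <= #|LL|)%N.
  case: splitL => zs DqL _.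
  have uz : uniq zs.
    rewrite -separable_prod_XsubC -(eqp_separable DqL).
    rewrite rmorphB /= map_polyXn map_polyX unlock /separable_poly.
    rewrite derivB derivXn derivX -mulr_natr -polyC_natr NR polyC0 mulr0 sub0r.
    have -> : (-1 : {poly L}) = (-1) *: 1 by rewrite scaleN1r.
    by rewrite coprimepZr ?coprimep1 // oppr_eq0 oner_eq0.
  have sz : size zs = N.
    have := eqp_size DqL; rewrite size_prod_XsubC size_map_poly size_XnsubX //.
    by case.
  rewrite -sz cardE; apply: uniq_leq_size => // x _.
  by have := @mem_enum LL LL x; rewrite inE => ->.
have := card_LL L; rewrite -/LL.
have -> : #|LL| = N by apply/eqP; rewrite eqn_leq up lo.
by rewrite /N => /eqP; rewrite eqn_exp2l // => /eqP.
Qed.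

Lemma subset_card (T : finType) (A : {set T}) K : (K <= #|A|)%N ->
  exists B : {set T}, B \subset A /\ #|B| = K.
Proof.
move=> KA; exists [set x in take K (enum A)]; split.
  by apply/subsetP => x; rewrite inE => /mem_take; rewrite mem_enum.
rewrite cardsE; have /card_uniqP -> := take_uniq K (enum_uniq (mem A)).
by rewrite size_take -cardE; case: ltnP => // h; apply/eqP; rewrite eqn_leq h KA.
Qed.

Lemma charnat (R : comNzRingType) p j : p \in [pchar R] -> [pchar R].-nat (p ^ j)%N.
Proof.
move=> ch; rewrite pnatX; apply/orP; left.
by rewrite pnatE ?(pcharf_prime ch).
Qed.

Lemma frobD (R : comNzRingType) p j (x y : R) : p \in [pchar R] ->
  (x + y) ^+ (p ^ j)%N = x ^+ (p ^ j)%N + y ^+ (p ^ j)%N.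
Proof. by move=> ch; rewrite exprDn_pchar // charnat. Qed.

Section Main.
Variables (F : finFieldType) (L : splittingFieldType F).
Variables (p k m : nat).
Hypothesis pp : prime p.
Hypothesis k0 : (0 < k)%N.
Let q := (p ^ k)%N.
Hypothesis cardF : #|F| = (q ^ 2)%N.
Hypothesis dimL : \dim {:L} = m.
Hypothesis oddm : odd m.

Let LL := FinFieldExtType L.

Lemma pchF : p \in [pchar F].
Proof. by apply: (card_finPcharP (n := (k * 2)%N)) => //; rewrite cardF expnM. Qed.
Lemma pchL : p \in [pchar L].
Proof. by rewrite pchar_lalg pchF. Qed.

Let Q := (q ^ m)%N.
Definition sig (x : L) := x ^+ Q.

Lemma QE : Q = (p ^ (k * m))%N. Proof. by rewrite /Q /q expnM. Qed.

Lemma sigD x y : sig (x + y) = sig x + sig y.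
Proof. by rewrite /sig QE frobD // pchL. Qed.
Lemma sig0 : sig 0 = 0.
Proof. by rewrite /sig expr0n QE expn_eq0 eqn0Ngt prime_gt0. Qed.
Lemma sigN x : sig (- x) = - sig x.
Proof. by apply/eqP; rewrite -subr_eq0 opprK -sigD addNr sig0. Qed.
Lemma sigB x y : sig (x - y) = sig x - sig y.
Proof. by rewrite sigD sigN. Qed.
Lemma sigM x y : sig (x * y) = sig x * sig y.
Proof. by rewrite /sig exprMn. Qed.
Lemma sigV x : sig (x^-1) = (sig x)^-1.
Proof. by rewrite /sig exprVn. Qed.
Lemma sig_eq0 x : (sig x == 0) = (x == 0).
Proof. by rewrite /sig expf_eq0 QE expn_gt0 prime_gt0. Qed.

Lemma allfix (x : L) : x ^+ (#|F| ^ m) = x.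
Proof.
have := Fermat's_little_theorem {:L}%AS x; rewrite memvf /= dimL.
by move/esym/eqP.
Qed.

Lemma sigK x : sig (sig x) = x.
Proof.
rewrite /sig -exprM.
have -> : (Q * Q = #|F| ^ m)%N by rewrite cardF /Q -expnD -expnM addnn mul2n.
exact: allfix.
Qed.


Let q2 := (q ^ 2)%N.
Lemma q2E : q2 = (p ^ (k * 2))%N. Proof. by rewrite /q2 /q expnM. Qed.
Lemma q2iE i : (q2 ^ i = p ^ (k * 2 * i))%N. Proof. by rewrite q2E -expnM. Qed.
Lemma m0 : (0 < m)%N. Proof. by rewrite lt0n; apply/negP => /eqP E; move: oddm; rewrite E. Qed.
Lemma q1 : (1 < q)%N.
Proof. by rewrite /q -{1}(expn0 p) ltn_exp2l ?prime_gt1. Qed.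
Lemma q21 : (1 < q2)%N.
Proof. by rewrite /q2 -{1}(expn0 q) ltn_exp2l ?q1. Qed.

Definition Tr (x : L) := \sum_(i < m) x ^+ (q2 ^ i).

Lemma frq2 i (x y : L) : (x + y) ^+ (q2 ^ i) = x ^+ (q2 ^ i) + y ^+ (q2 ^ i).
Proof. by rewrite q2iE frobD // pchL. Qed.

Lemma TrD x y : Tr (x + y) = Tr x + Tr y.
Proof. by rewrite /Tr -big_split /=; apply: eq_bigr => i _; rewrite frq2. Qed.

Lemma allfix2 (x : L) : x ^+ (q2 ^ m) = x.
Proof. by rewrite /q2 -cardF allfix. Qed.

Lemma Tr_shift x : Tr (x ^+ q2) = Tr x.
Proof.
rewrite /Tr; have Em : m = m.-1.+1 by rewrite prednK // m0.
rewrite [in RHS]Em [in LHS]Em big_ord_recr big_ord_recl /= addrC; congr (_ + _).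
  by rewrite -exprM -expnS -Em allfix2 expn0 expr1.
by apply: eq_bigr => i _; rewrite -exprM -expnS.
Qed.

Lemma Tr_iter j x : Tr (x ^+ (q2 ^ j)) = Tr x.
Proof.
elim: j => [|j IH]; first by rewrite expn0 expr1.
by rewrite expnSr exprM Tr_shift IH.
Qed.

Lemma Tr0 : Tr 0 = 0.
Proof.
by rewrite /Tr big1 // => i _; rewrite expr0n expn_eq0 eqn0Ngt (ltnW q21).
Qed.

Lemma Trq x : (Tr x) ^+ q = Tr (x ^+ q).
Proof.
rewrite /Tr (big_morph (fun y : L => y ^+ q) (id1 := 0) (op1 := +%R)).
- by apply: eq_bigr => i _; rewrite -!exprM mulnC.
- by move=> a b; rewrite /q frobD // pchL.
- by rewrite expr0n /q expn_eq0 eqn0Ngt prime_gt0.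
Qed.

Lemma Tr_sig x : Tr (sig x) = (Tr x) ^+ q.
Proof.
rewrite Trq /sig.
have -> : Q = (q * q2 ^ m./2)%N.
  rewrite /Q /q2 -expnM -expnS; congr (_ ^ _)%N.
  by rewrite -{1}(odd_double_half m) oddm mul2n.
by rewrite exprM Tr_iter.
Qed.

Lemma Tr_fix x : (Tr x) ^+ q2 = Tr x.
Proof.
rewrite -{2}(Tr_shift x) /Tr (big_morph (fun y : L => y ^+ q2) (id1 := 0) (op1 := +%R)).
- by apply: eq_bigr => i _; rewrite -!exprM mulnC.
- by move=> a b; have := frq2 1 a b; rewrite expn1.
- by rewrite expr0n /q2 expn_eq0 eqn0Ngt ltnW // q1.
Qed.

Lemma Tr_in1 x : Tr x \in (1%VS : {vspace L}).
Proof.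
have := Fermat's_little_theorem (1%AS : {subfield L}) (Tr x).
by rewrite /= dimv1 expn1 cardF Tr_fix eqxx.
Qed.

Definition lam (x : L) : F := odflt 0 [pick c : F | c%:A == Tr x].

Lemma lamE x : in_alg L (lam x) = Tr x.
Proof.
rewrite in_algE /lam; case: pickP => [c /eqP //|] /= H.
have /vlineP [c Ec] := Tr_in1 x.
by move: (H c); rewrite Ec eqxx.
Qed.

Lemma inA_inj : injective (in_alg L).
Proof. exact: (fmorph_inj (in_alg L)). Qed.

Lemma lamD x y : lam (x + y) = lam x + lam y.
Proof. by apply: inA_inj; rewrite lamE TrD -!lamE; exact/esym/rmorphD. Qed.

Lemma lam0 : lam 0 = 0.
Proof. by apply: inA_inj; rewrite lamE Tr0; exact/esym/rmorph0. Qed.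

Lemma lamN x : lam (- x) = - lam x.
Proof. by apply/eqP; rewrite -subr_eq0 opprK -lamD addNr lam0. Qed.

Lemma fixF (c : F) j : c ^+ (q2 ^ j) = c.
Proof.
elim: j => [|j IH]; first by rewrite expn0 expr1.
by rewrite expnSr exprM IH /q2 -cardF expf_card.
Qed.

Lemma TrZ (c : F) x : Tr (in_alg L c * x) = in_alg L c * Tr x.
Proof.
rewrite /Tr mulr_sumr; apply: eq_bigr => i _.
by rewrite exprMn -rmorphXn fixF.
Qed.

Lemma lamZ (c : F) x : lam (in_alg L c * x) = c * lam x.
Proof. by apply: inA_inj; rewrite lamE TrZ -!lamE; exact/esym/rmorphM. Qed.

Lemma lam_sig x : lam (sig x) = lam x ^+ q.
Proof. by apply: inA_inj; rewrite lamE Tr_sig -!lamE; exact/esym/rmorphXn. Qed.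

Lemma cardLL : #|LL| = (q2 ^ m)%N.
Proof. by rewrite /LL card_LL dimL cardF. Qed.

Lemma Tr_nz : ~ (forall z : L, Tr z = 0).
Proof.
move=> H.
pose T : {poly LL} := \sum_(i < m) 'X^(q2 ^ i).
have Em : m = m.-1.+1 by rewrite prednK // m0.
have Tnz : T != 0.
  apply/eqP => /(congr1 (fun P : {poly LL} => P`_1)) /eqP.
  rewrite coef0 /T coef_sum.
  under eq_bigr do rewrite coefXn.
  rewrite Em big_ord_recl expn0 eqxx big1 ?addr0 ?oner_eq0 // => i _.
  by rewrite eq_sym /bump /= -[1%N](expn0 q2) eqn_exp2l ?q21.
have szT : (size T <= (q2 ^ m.-1).+1)%N.
  apply: leq_trans (size_sum _ _ _) _; apply/bigmax_leqP => i _.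
  rewrite size_polyXn ltnS leq_exp2l ?q21 // -ltnS -Em //.
have := @max_poly_roots LL T (enum LL) Tnz.
rewrite enum_uniq -cardE cardLL.
have -> : all (root T) (enum LL).
  apply/allP => z _; rewrite /root /T horner_sum.
  under eq_bigr do rewrite hornerXn.
  by have := H z; rewrite /Tr => ->.
move=> /(_ isT isT) lt.
have := leq_trans lt szT; rewrite Em expnS.
have : (2 <= q2)%N := q21.
have : (0 < q2 ^ m.-1)%N by rewrite expn_gt0 (ltnW q21).
set a := (q2 ^ m.-1)%N; move=> a0 h2.
have : (a * 2 <= a * q2)%N by rewrite leq_mul2l h2 orbT.
rewrite mulnC => h; lia.
Qed.

Lemma lam_nondeg (y : L) : (forall x, lam (x * y) = 0) -> y = 0.
Proof.
move=> H; apply/eqP/negP => /negP ynz.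
apply: Tr_nz => z.
have := H (z / y); rewrite mulfVK // => /(congr1 (in_alg L)).
by rewrite lamE => ->; exact: rmorph0.
Qed.

Lemma QE2 : Q = (q * q2 ^ m./2)%N.
Proof.
rewrite /Q /q2 -expnM -expnS; congr (_ ^ _)%N.
by rewrite -{1}(odd_double_half m) oddm mul2n.
Qed.

Lemma sig_inalg (c : F) : sig (in_alg L c) = in_alg L (c ^+ q).
Proof. by rewrite /sig -rmorphXn QE2 exprM fixF. Qed.

Lemma sig_sum (I : Type) (r : seq I) (P : pred I) (f : I -> L) :
  sig (\sum_(i <- r | P i) f i) = \sum_(i <- r | P i) sig (f i).
Proof. exact: (big_morph sig sigD sig0). Qed.

Lemma lam_sum (I : Type) (r : seq I) (P : pred I) (f : I -> L) :
  lam (\sum_(i <- r | P i) f i) = \sum_(i <- r | P i) lam (f i).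
Proof. exact: (big_morph lam lamD lam0). Qed.

Variable n : nat.
Hypothesis nE : n = (2 * m)%N.

Definition X := vbasis ({:L}%VS).
Definition blk (i : 'I_n) : bool := (m <= i)%N.
Definition jj (i : 'I_n) : nat := if blk i then (i - m)%N else i.
Lemma jj_lt i : (jj i < \dim {:L})%N.
Proof.
rewrite dimL /jj /blk; have := ltn_ord i; move: (nat_of_ord i) => a.
by rewrite nE; case: ifP => ? ?; lia.
Qed.
Definition oj (i : 'I_n) : 'I_(\dim {:L}) := Ordinal (jj_lt i).
Definition e (i : 'I_n) : L := X`_(oj i).

Definition Phi (h : bool -> bool -> L) : 'M[F]_n :=
  \matrix_(i, i') lam (e i * h (blk i) (blk i') * sig (e i')).

Lemma Phi_herm h : (forall r s, h s r = sig (h r s)) ->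
  forall i i', Phi h i' i = (Phi h i i') ^+ q.
Proof.
move=> hh i i'; rewrite !mxE -lam_sig !sigM sigK hh; congr lam; ring.
Qed.

Lemma Phi_sub h h' : Phi (fun r s => h r s - h' r s) = Phi h - Phi h'.
Proof.
apply/matrixP => i i'; rewrite !mxE mulrBr mulrBl lamD lamN //.
Qed.

Definition det2 (h : bool -> bool -> L) :=
  h false false * h true true - h false true * h true false.

Lemma freeX : free X.
Proof. exact: basis_free (vbasisP _). Qed.

Lemma coordZ (c : F) w kk : coord X kk (in_alg L c * w) = c * coord X kk w.
Proof. by rewrite mulr_algl linearZ. Qed.

Lemma Phi_unit h : det2 h != 0 -> Phi h \in unitmx.
Proof.
move=> dh; rewrite unitmxE unitfE; apply/negP => /det0P [v vnz vA].
pose y (b : bool) := \sum_(i < n) in_alg L (v 0 i) * e i * h (blk i) b.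
have c1 : forall i', lam (y (blk i') * sig (e i')) = 0.
  move=> i'; have := congr1 (fun M : 'M[F]_(1, n) => M 0 i') vA; rewrite !mxE => <-.
  rewrite /y mulr_suml lam_sum; apply: eq_bigr => i _.
  rewrite mxE -lamZ; congr lam; ring.
have c2 : forall (b : bool) (kk : 'I_(\dim {:L})), lam (y b * sig (X`_kk)) = 0.
  move=> b kk.
  have hk : (b * m + kk < n)%N.
    have := ltn_ord kk; move: (nat_of_ord kk) => a.
    rewrite dimL nE; case: b => /=; lia.
  pose i' := Ordinal hk.
  have bi : blk i' = b.
    rewrite /blk /=; have := ltn_ord kk; move: (nat_of_ord kk) => a.
    rewrite dimL; case: (b) => /=; lia.
  have oi : oj i' = kk.
    apply: val_inj; rewrite /= /jj bi /=; move: (nat_of_ord kk) => a.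
    by case: (b) => /=; lia.
  by have := c1 i'; rewrite bi /e oi.
have c3 : forall b, y b = 0.
  move=> b; apply: lam_nondeg => x.
  have Ex : x = \sum_(kk < \dim {:L}) in_alg L (coord X kk (sig x) ^+ q) * sig X`_kk.
    rewrite -{1}(sigK x) {1}(coord_vbasis (memvf (sig x))) sig_sum.
    by apply: eq_bigr => kk _; rewrite -mulr_algl sigM sig_inalg.
  rewrite Ex mulr_suml lam_sum big1 // => kk _.
  by rewrite -mulrA lamZ [sig _ * _]mulrC c2 mulr0.
pose x b := \sum_(i < n | blk i == b) v 0 i *: e i.
have c4 : forall b', y b' = x false * h false b' + x true * h true b'.
  move=> b'; rewrite /y (bigID (fun i => blk i)) /= addrC; congr (_ + _).
  - rewrite /x mulr_suml; apply: eq_big => i; first by case: (blk i).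
    by move/negbTE => ->; rewrite mulr_algl.
  - rewrite /x mulr_suml; apply: eq_big => i; first by case: (blk i).
    by move=> ->; rewrite mulr_algl.
have x0 : forall b, x b = 0.
  have yf := c3 false; have yt := c3 true; rewrite !c4 in yf yt.
  have E1 : x false * det2 h = 0.
    transitivity (h true true * (x false * h false false + x true * h true false)
      - h true false * (x false * h false true + x true * h true true)).
      by rewrite /det2; ring.
    by rewrite yf yt; ring.
  have E2 : x true * det2 h = 0.
    transitivity (- h false true * (x false * h false false + x true * h true false)
      + h false false * (x false * h false true + x true * h true true)).
      by rewrite /det2; ring.
    by rewrite yf yt; ring.
  by case; apply/eqP; [move/eqP: E2 | move/eqP: E1]; rewrite mulf_eq0 (negbTE dh) orbF.
have c6 : forall i, v 0 i = 0.
  move=> i0; have := congr1 (coord X (oj i0)) (x0 (blk i0)).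
  rewrite linear0 /x linear_sum => <-.
  rewrite (bigD1 i0) ?eqxx // big1 ?addr0.
  - by rewrite linearZ /= /e coord_free ?freeX // eqxx mulr1 addr0.
  - move=> i /andP [/eqP bi ne]; rewrite linearZ /= /e coord_free ?freeX //.
    suff /negbTE -> : oj i != oj i0 by rewrite mulr0.
    apply: contra ne => /eqP /(congr1 val) /= E; apply/eqP/val_inj => /=.
    move: E bi; rewrite /jj /blk; have := ltn_ord i; have := ltn_ord i0.
    move: (nat_of_ord i) (nat_of_ord i0) => a b'; rewrite nE.
    by case: ifP; case: ifP => //= *; lia.
move: vnz; rewrite (_ : v = 0) ?eqxx //; apply/rowP => i; rewrite mxE.
exact: c6.
Qed.

Lemma Q1 : (1 < Q)%N.
Proof. by rewrite /Q -{1}(expn0 q) ltn_exp2l ?q1 ?m0. Qed.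

Lemma cardLLQ : #|LL| = (Q * Q)%N.
Proof. by rewrite cardLL /q2 /Q -expnM -expnD addnn mul2n. Qed.

Definition Fix : {set LL} := [set b : LL | sig b == b].

Lemma card_Fix : (#|Fix| <= Q)%N.
Proof.
have := @max_poly_roots LL ('X^Q - 'X) (enum Fix).
rewrite -size_poly_gt0 size_XnsubX ?Q1 // -cardE => H; rewrite -ltnS H //.
- apply/allP => x; rewrite mem_enum inE => /eqP sx.
  by rewrite /root !hornerE subr_eq0; apply/eqP; exact: sx.
- exact: enum_uniq.
Qed.

Lemma exists_iota : exists iota : L, iota != 0 /\ sig iota = - iota.
Proof.
have [xi nxi] : exists xi : LL, xi \notin Fix.
  case: (pickP (fun x : LL => x \notin Fix)) => [xi nxi | H]; first by exists xi.
  have : (#|LL| <= Q)%N.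
    apply: leq_trans card_Fix; apply: subset_leq_card; apply/subsetP => x _.
    by have := H x; move/negbFE.
  rewrite cardLLQ; have := Q1; move: Q => a; nia.
exists (xi - sig xi); split.
  by rewrite subr_eq0 eq_sym; move: nxi; rewrite inE.
by rewrite sigB sigK opprB.
Qed.

Definition sigL (x : LL) : LL := sig x.
Lemma sigLK : cancel sigL sigL. Proof. exact: sigK. Qed.

Definition T : {set LL} := [set b : LL | (enum_rank b < enum_rank (sigL b))%N].

Lemma card_T : (Q * Q <= #|T| * 2 + Q)%N.
Proof.
pose T' : {set LL} := [set b : LL | (enum_rank (sigL b) < enum_rank b)%N].
have cT' : (#|T'| <= #|T|)%N.
  rewrite -(card_imset T' (can_inj sigLK)); apply: subset_leq_card.
  apply/subsetP => x /imsetP [y]; rewrite !inE => Hy ->.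
  by rewrite sigLK.
have sub : [set: LL] \subset T :|: T' :|: Fix.
  apply/subsetP => b _; rewrite !inE.
  have [h|h|E] := ltngtP (enum_rank b) (enum_rank (sigL b)).
  - by apply/orP; left; apply/orP; left.
  - by apply/orP; left; apply/orP; right.
  have /enum_rank_inj Eb : enum_rank b = enum_rank (sigL b) by apply: val_inj.
  by apply/orP; right; apply/eqP; rewrite {2}Eb.
have h1 := subset_leq_card sub; rewrite cardsT in h1.
have h2 := (leq_card_setU (T :|: T') Fix).1.
have h3 := (leq_card_setU T T').1.
rewrite -cardLLQ; apply: (leq_trans h1); apply: (leq_trans h2).
rewrite muln2 -addnn; apply: leq_add; last exact: card_Fix.
exact: leq_trans h3 (leq_add (leqnn _) cT').
Qed.

Variable iota : L.
Hypothesis iota0 : iota != 0.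
Hypothesis siota : sig iota = - iota.

Definition phi (b : L) := (b - sig b) / iota.
Definition psi (b : L) := - (iota * (b - sig b)).

Lemma sig_phi b : sig (phi b) = phi b.
Proof.
rewrite /phi sigM sigV sigB sigK siota invrN mulrN -mulNr opprB //.
Qed.

Lemma sig_psi b : sig (psi b) = psi b.
Proof. by rewrite /psi sigN sigM sigB sigK siota mulNr -mulrN opprB. Qed.

Definition Mc (x : LL * bool) : bool -> bool -> L := fun r s =>
  if r then (if s then (if (x.1 \in T) && x.2 then phi x.1 else 0) else sig x.1)
  else (if s then x.1 else (if (x.1 \in T) && ~~ x.2 then psi x.1 else 0)).

Lemma Mc_herm x r s : Mc x s r = sig (Mc x r s).
Proof.
case: r; case: s => //=; rewrite ?sigK //.
  by case: ifP => _; rewrite ?sig_phi ?sig0.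
by case: ifP => _; rewrite ?sig_psi ?sig0.
Qed.

Definition D : {set LL * bool} := [set x | (x.1 \in T) || x.2].

Lemma inD x : (x \in D) = (x.1 \in T) || x.2.
Proof. by rewrite inE. Qed.

Definition dM x y := fun r s => Mc x r s - Mc y r s.

Lemma det_gen (h : bool -> bool -> L) (be : L) : h false true = be ->
  h true false = sig be -> h false false * h true true = 0 -> be != 0 ->
  det2 h != 0.
Proof.
move=> h1 h2 h3 bnz; rewrite /det2 h1 h2 h3 sub0r oppr_eq0 mulf_neq0 //.
by rewrite sig_eq0.
Qed.

Lemma T_conj b b' : b \in T -> b' \in T -> (b : L) != sig b'.
Proof.
rewrite !inE => Tb Tb'; apply/eqP => E.
move: Tb Tb'; rewrite /sigL E sigK.
have -> : (sig b' : LL) = b by rewrite E.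
move=> h1 h2; have := ltn_trans h1 h2; by rewrite ltnn.
Qed.

Lemma det_A b b' : b \in T -> b' \in T -> det2 (dM (b, false) (b', true)) != 0.
Proof.
move=> Tb Tb'.
have E : det2 (dM (b, false) (b', true)) = - ((b - sig b') * (sig b - b')).
  rewrite /det2 /dM /Mc /= Tb Tb' /= /phi /psi; field.
  exact: iota0.
rewrite E oppr_eq0 mulf_neq0 // subr_eq0 ?T_conj //.
apply/eqP => E2; have := T_conj Tb' Tb; rewrite -E2 eqxx //.
Qed.

Lemma det2_sym x y : det2 (dM x y) = det2 (dM y x).
Proof. rewrite /det2 /dM; ring. Qed.

Lemma Mc_det x y : x \in D -> y \in D -> x != y -> det2 (dM x y) != 0.
Proof.
move: x y => [b t] [b' t']; rewrite !inD /=.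
case Tb : (b \in T); case Tb' : (b' \in T); case: t; case: t' => //= _ _ Hne.
all: try by apply: det_A.
all: try by rewrite det2_sym; apply: det_A.
all: apply: (det_gen (be := b - b')); rewrite /dM /Mc /= ?Tb ?Tb' /= ?sigB ?subrr ?mul0r ?mulr0 //.
all: rewrite subr_eq0.
all: try by move: Hne; apply: contra => /eqP ->.
all: by apply/eqP => E; move: Tb Tb'; rewrite E => ->.
Qed.

Lemma n0 : (0 < n)%N. Proof. by rewrite nE muln_gt0 m0. Qed.

Lemma Phi_inj x y : x \in D -> y \in D -> Phi (Mc x) = Phi (Mc y) -> x = y.
Proof.
move=> Dx Dy E; apply/eqP; apply/negP => /negP ne.
have := Phi_unit (Mc_det Dx Dy ne); rewrite /dM Phi_sub E subrr.
move/mxrank_unit; rewrite mxrank0 => n00; have := n0; by rewrite -n00.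
Qed.

Lemma main_sec K : (2 <= K)%N -> (K <= Q * Q + #|T|)%N ->
  exists C : {set 'M[F]_n}, is_hermitian_d_code q n C /\ #|C| = K.
Proof.
move=> K2 KD.
pose A : {set LL * bool} := [set (b, true) | b in [set: LL]].
pose B : {set LL * bool} := [set (b, false) | b in T].
have cA : #|A| = #|LL|.
  by rewrite card_imset ?cardsT // => x y [].
have cB : #|B| = #|T|.
  by rewrite card_imset // => x y [].
have dAB : [disjoint A & B].
  rewrite -setI_eq0; apply/eqP/setP => x; rewrite !inE.
  apply/negbTE/negP => /andP [/imsetP [b _ ->] /imsetP [b' _ E]].
  by move: E => [].
have cAB : #|A :|: B| = (#|LL| + #|T|)%N.
  by have := (leq_card_setU A B).2; rewrite dAB -cA -cB => /eqP.
have [D' [sD' cD']] : exists D' : {set LL * bool}, D' \subset A :|: B /\ #|D'| = K.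
  by apply: subset_card; rewrite cAB cardLLQ.
have sD : D' \subset D.
  apply: subset_trans sD' _; apply/subsetP => x; rewrite inE inD.
  by case/orP => /imsetP [b Hb ->] //=; rewrite ?orbT ?Hb.
pose C := [set Phi (Mc x) | x in D'].
have cC : #|C| = K.
  rewrite card_in_imset // => x y Hx Hy; apply: Phi_inj.
    exact: (subsetP sD).
  exact: (subsetP sD).
have rk : forall c1 c2, c1 \in C -> c2 \in C -> c1 != c2 -> \rank (c1 - c2) = n.
  move=> c1 c2 /imsetP [x Hx ->] /imsetP [y Hy ->] ne.
  have ne' : x != y by apply: contra ne => /eqP ->.
  rewrite -Phi_sub; apply: mxrank_unit; apply: Phi_unit.
  by apply: Mc_det => //; apply: (subsetP sD).
exists C; split => //.
have [c1 [c2 [H1 H2 ne]]] : exists c1 c2, [/\ c1 \in C, c2 \in C & c1 != c2].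
  by apply/card_gt1P; rewrite cC.
split.
- by apply/set0Pn; exists c1.
- move=> c /imsetP [x _ ->] i j; apply: Phi_herm; exact: Mc_herm.
- by exists c1, c2; split => //; apply: rk.
- by move=> d1 d2 h1 h2 h3; rewrite rk.
Qed.

End Main.

Local Close Scope ring_scope.

Theorem mainTheorem4 (q n : nat) (F : finFieldType) :
  prime_power q -> #|F| = (q ^ 2)%N ->
  (0 < n)%N -> ~~ odd n -> odd (n %/ 2) ->
  exists C : {set 'M[F]_n},
    is_hermitian_d_code q n C /\
    #|C| = ((3 * q ^ n - q ^ (n %/ 2)) %/ 2)%N.
Proof.
move=> [p [k [pp k0 ->]]] cF n0 ev od.
set m := (n %/ 2)%N in od *.
have nE : n = (2 * m)%N.
  by rewrite /m -{1}(odd_double_half n) (negbTE ev) divn2 mul2n.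
have m0 : (0 < m)%N by move: od; rewrite lt0n; apply: contraL => /eqP ->.
have cF' : #|F| = (p ^ (k * 2))%N by rewrite cF -expnM.
have [L dimL] := ext_deg pp cF' m0.
have [iota [i0 si]] := exists_iota pp k0 cF dimL od nE.
have cT := card_T pp k0 cF dimL od.
have Q1' := Q1 pp k0 od.
have -> : ((p ^ k) ^ n = (p ^ k) ^ m * (p ^ k) ^ m)%N by rewrite -expnD addnn -mul2n -nE.
apply: (main_sec pp k0 cF dimL od nE i0 si).
- move: Q1'; set Q := ((p ^ k) ^ m)%N => Q1'.
  have : (Q * 2 <= Q * Q)%N by rewrite leq_mul2l Q1' orbT.
  lia.
- move: Q1' cT; set Q := ((p ^ k) ^ m)%N => Q1' cT.
  lia.
Qed.
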